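(* Let $G$ be a connected plane (multi)graph with at least two vertices such that every internal vertex and every internal face has degree at least $4$. Let $b$ be the number of external vertices. Then the average degree of the external vertices of $G$ is at most $3-\frac{4}{b}$. In particular, $G$ has an external vertex of degree less than $3$.
   Context: A plane graph is a finite planar graph with a fixed embedding in the plane. The external face is the unbounded face; other faces are internal. A vertex is external if it lies on the boundary of the external face, and internal otherwise. The degree of a face is its degree as a vertex of the dual graph, i.e. the number of edges on its boundary counted with multiplicity. *)

(* Defs.v *)
(* Plane (multi)graphs are represented combinatorially as
   connected rotation systems (combinatorial maps) of genus 0, with a
   distinguished external face. *)
From HB Require Import structures.
From mathcomp Require Import all_boot all_order all_algebra.
Set Implicit Arguments. Unset Strict Implicit. Unset Printing Implicit Defensive.

Section Maps.
Variable D : finType.        (* darts = half-edges *)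
Variables (sigma alpha : D -> D).
(* sigma : rotation of darts around their origin vertex
   alpha : fixed-point-free involution pairing the two darts of an edge *)

(* face permutation: traverse the edge, then turn at the next vertex *)
Definition phi (d : D) : D := sigma (alpha d).

Definition orbits (f : D -> D) : {set {set D}} :=
  [set [set y | fconnect f x y] | x : D].

Definition vertices := orbits sigma.   (* vertices; degree = #|v| *)
Definition edges    := orbits alpha.
Definition faces    := orbits phi.     (* faces; degree = #|f| (with multiplicity) *)

Definition is_comb_map : Prop :=
  [/\ injective sigma, forall d, alpha (alpha d) = d & forall d, alpha d != d].

Definition map_connected : Prop :=
  forall x y, connect [rel a b | (b == sigma a) || (b == alpha a)] x y.

(* plane = genus 0: Euler's formula V - E + F = 2 for a connected map *)
Definition genus0 : Prop := #|vertices| + #|faces| = #|edges| + 2.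

Definition plane_graph (fo : {set D}) : Prop :=
  [/\ is_comb_map, map_connected, genus0 & fo \in faces].

Definition external_vertices (fo : {set D}) : {set {set D}} :=
  [set v in vertices | v :&: fo != set0].

Definition internal_vertices (fo : {set D}) : {set {set D}} :=
  [set v in vertices | v :&: fo == set0].

Definition internal_faces (fo : {set D}) : {set {set D}} :=
  faces :\ fo.

End Maps.

(* Main.v *)
Require Import Defs.
From HB Require Import structures.
From mathcomp Require Import all_boot all_order all_algebra.
From mathcomp Require Import zify lra.
Import Order.TTheory GRing.Theory Num.Theory.

Section Helpers.
Variable D : finType.
Variable f : D -> D.
Hypothesis injf : injective f.

Lemma orbits_partition : partition (orbits f) [set: D].
Proof.
have -> : orbits f = equivalence_partition (fconnect f) setT.
  rewrite /orbits /equivalence_partition; apply/setP => A.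
  apply/imsetP/imsetP => [[x _ ->]|[x _ ->]]; exists x => //;
    apply/setP => y; rewrite !inE //.
apply: equivalence_partitionP => x y z _ _ _ /=.
split; first exact: connect0.
move=> Hxy; apply/idP/idP => H.
  by rewrite (fconnect_sym injf) in Hxy; exact: connect_trans Hxy H.
exact: connect_trans Hxy H.
Qed.

Lemma sum_orbits : \sum_(A in orbits f) #|A| = #|D|.
Proof. by rewrite -(card_partition orbits_partition) cardsT. Qed.

Lemma orbit_mem A x : A \in orbits f -> x \in A -> A = [set y | fconnect f x y].
Proof.
case/imsetP => z _ ->; rewrite inE => zx; apply/setP => y; rewrite !inE.
apply/idP/idP => H.
  by rewrite (fconnect_sym injf) in zx; exact: connect_trans zx H.
exact: connect_trans zx H.
Qed.

End Helpers.

Theorem lemma6p4 (D : finType) (sigma alpha : D -> D) (fo : {set D}) :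
  plane_graph sigma alpha fo ->
  2 <= #|vertices sigma| ->
  (forall v, v \in internal_vertices sigma fo -> 4 <= #|v|) ->
  (forall f, f \in internal_faces sigma alpha fo -> 4 <= #|f|) ->
  let b := #|external_vertices sigma fo| in
  ((\sum_(v in external_vertices sigma fo) #|v|)%:R / b%:R
     <= 3 - 4 / b%:R :> rat)%R
  /\ exists2 v, v \in external_vertices sigma fo & #|v| < 3.
Proof.
case=> [[injs aa afix] _ Heu fofa] _ Hiv Hif b.
have inja : injective alpha by exact: (can_inj aa).
have injp : injective (phi sigma alpha) by move=> x y /injs /inja.
set S := \sum_(v in external_vertices sigma fo) #|v|.
set P := fun v : {set D} => v :&: fo != set0.
have HV : #|D| = S + \sum_(v in internal_vertices sigma fo) #|v|.
  rewrite -(@sum_orbits _ _ injs) (bigID P) /=; congr (_ + _).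
    by apply: eq_bigl => v; rewrite inE.
  by apply: eq_bigl => v; rewrite inE /P negbK.
have HVc : #|vertices sigma| = b + #|internal_vertices sigma fo|.
  rewrite /b -!sum1_card (bigID P) /=; congr (_ + _).
    by apply: eq_bigl => v; rewrite inE.
  by apply: eq_bigl => v; rewrite inE /P negbK.
have HI : 4 * #|internal_vertices sigma fo| <=
          \sum_(v in internal_vertices sigma fo) #|v|.
  by rewrite mulnC -sum_nat_const; apply: leq_sum => v /Hiv.
have HF : #|D| = #|fo| + \sum_(f in internal_faces sigma alpha fo) #|f|.
  rewrite -(@sum_orbits _ _ injp) (bigD1 fo) //=; congr (_ + _).
  by apply: eq_bigl => v; rewrite !inE andbC.
have HFc : #|faces sigma alpha| = 1 + #|internal_faces sigma alpha fo|.
  by rewrite (cardsD1 fo) fofa.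
have HFI : 4 * #|internal_faces sigma alpha fo| <=
          \sum_(f in internal_faces sigma alpha fo) #|f|.
  by rewrite mulnC -sum_nat_const; apply: leq_sum => v /Hif.
have HE : #|D| = #|edges alpha| * 2.
  rewrite -(@sum_orbits _ _ inja) -sum_nat_const; apply: eq_bigr => e He.
  case/imsetP: He => x _ ->.
  have -> : [set y | fconnect alpha x y] = [set x; alpha x].
    apply/setP => y; rewrite !inE; apply/idP/idP.
      move=> Hc.
      have cl : closed (frel alpha) [pred z | (z == x) || (z == alpha x)].
        move=> u w /= /eqP <-.
        apply/idP/idP => /orP [] /eqP Hu.
        - by rewrite !inE Hu eqxx orbT.
        - by rewrite !inE Hu aa eqxx.
        - by rewrite !inE -[u]aa Hu eqxx orbT.
        - by rewrite !inE (inja _ _ Hu) eqxx.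
      by have := closed_connect cl Hc; rewrite !inE eqxx /= => <-.
    case/orP => /eqP ->; first exact: connect0.
    exact: fconnect1.
  by rewrite cards2 eq_sym afix.
have Hbk : b <= #|fo|.
  apply: leq_trans (leq_imset_card (fun d => [set y | fconnect sigma d y]) fo).
  apply: subset_leq_card; apply/subsetP => v; rewrite inE => /andP [Hv].
  case/set0Pn => d; rewrite inE => /andP [dv dfo].
  by rewrite (@orbit_mem _ _ injs _ _ Hv dv); apply: imset_f.
have Hb0 : 0 < b.
  case/imsetP: fofa => x _ Hx.
  have xfo : x \in fo by rewrite Hx inE connect0.
  apply/card_gt0P; exists [set y | fconnect sigma x y].
  rewrite inE imset_f //=; apply/set0Pn; exists x.
  by rewrite inE inE connect0 xfo.
have Hmain : S + 4 <= 3 * b.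
  move: Heu; rewrite /genus0 => Heu. lia.
split.
  have Hq : ((S + 4)%:R <= (3 * b)%:R :> rat)%R by rewrite ler_nat.
  rewrite natrD natrM in Hq.
  have bpos : (0 < b%:R :> rat)%R by rewrite ltr0n.
  rewrite ler_pdivrMr // mulrBl divfK; last by rewrite gt_eqF.
  lra.
have [/exists_inP [v Hv Hv3]|/exists_inPn H] := boolP [exists v in external_vertices sigma fo, #|v| < 3].
  by exists v.
exfalso.
have : 3 * b <= S.
  by rewrite /b -sum1_card big_distrr /= muln1; apply: leq_sum => v /H; rewrite -leqNgt.
lia.
Qed.
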